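(* Let $w=w_1\cdots w_n$ be a word of distinct positive integers avoiding $31245,32145,31254,32154$. Let $l_1<\dots<l_s$ be the positions of the left-to-right maxima of $w$ and $r_1<\dots<r_t$ the positions of the right-to-left maxima (so $l_1=1$, $l_s=r_1$ is the position of $\max(w)$, $r_t=n$). Assume $s>1$, $t>1$, $l_s>s$, and $w_{l_{s-1}}<w_{r_2}$. Then exactly one of the following holds: (I-1) $l_s=l_{s-1}+1$; (I-2) $l_s=l_{s-1}+2$ and $w_j<w_{l_{s-1}}$ for all $l_s<j<r_2$; (I-3) $l_s=l_{s-1}+2$ and there is an integer $k$ with $l_s<k<r_2$ such that $w_j>w_{l_{s-1}}$ for all $l_s<j\le k$ and $w_j<w_{l_{s-1}}$ for all $k<j<r_2$.
   Context: A word of distinct positive integers avoids a pattern $P$ (a permutation of $[m]$) if no subsequence of length $m$ is order-isomorphic to $P$. A left-to-right (resp. right-to-left) maximum of $w$ is a letter $w_i$ greater than all letters to its left (resp. right). *)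

(* Defs.v *)
From mathcomp Require Import all_boot.
Set Implicit Arguments. Unset Strict Implicit. Unset Printing Implicit Defensive.

(* Words are seq nat; positions are 1-based: letter (w `@ i) = w_i for 1 <= i <= size w. *)
Definition letter (w : seq nat) (i : nat) : nat := nth 0 w i.-1.
Notation "w `@ i" := (letter w i) (at level 10).

Definition distinct_pos_word (w : seq nat) : Prop := uniq w /\ all (fun x => 0 < x) w.

Definition order_iso (u P : seq nat) : Prop :=
  size u = size P /\
  forall i j, i < size u -> j < size u ->
    (nth 0 u i < nth 0 u j) = (nth 0 P i < nth 0 P j).

Definition avoids (w P : seq nat) : Prop :=
  forall u, subseq u w -> ~ order_iso u P.

Definition is_ltr_max (w : seq nat) (i : nat) : bool :=
  (1 <= i <= size w) && all (fun j => w `@ j < w `@ i) (iota 1 i.-1).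

Definition is_rtl_max (w : seq nat) (i : nat) : bool :=
  (1 <= i <= size w) && all (fun j => w `@ j < w `@ i) (iota i.+1 (size w - i)).

Definition ltr_pos (w : seq nat) : seq nat := [seq i <- iota 1 (size w) | is_ltr_max w i].
Definition rtl_pos (w : seq nat) : seq nat := [seq i <- iota 1 (size w) | is_rtl_max w i].

(* 1-based access: lpos w k = l_k, rpos w k = r_k *)
Definition lpos (w : seq nat) (k : nat) : nat := nth 0 (ltr_pos w) k.-1.
Definition rpos (w : seq nat) (k : nat) : nat := nth 0 (rtl_pos w) k.-1.

(* Main.v *)
Require Import Defs.
From mathcomp Require Import all_boot zify.

Lemma sub_iota (ix : seq nat) : forall m n, all (fun i => m <= i < m + n) ix ->
  sorted ltn ix -> subseq ix (iota m n).
Proof.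
elim: ix => [|i ix IH] m n; first by rewrite sub0seq.
move=> Hall Hs.
elim: n m Hall => [|n IHn] m Hall.
  by move: Hall => /= /andP[]; lia.
rewrite /= -/(iota _ _).
have Hp : all (fun j => i < j) ix.
  by move: Hs; rewrite /= (path_sortedE ltn_trans) => /andP[].
move: Hall => /= /andP[Hi Hall].
case: eqP => [<-|Hne].
  apply: IH; last by move: Hs => /= /path_sorted.
  apply/allP => j Hj; move/allP: Hall => /(_ j Hj); move/allP: Hp => /(_ j Hj); lia.
apply: IHn => /=; apply/andP; split; first lia.
apply/allP => j Hj; move/allP: Hall => /(_ j Hj); move/allP: Hp => /(_ j Hj); lia.
Qed.

Lemma subseq_pos (w : seq nat) (ps : seq nat) :
  all (fun p => 0 < p <= size w) ps -> sorted ltn ps ->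
  subseq [seq w `@ p | p <- ps] w.
Proof.
move=> Ha Hs.
have -> : [seq w `@ p | p <- ps] = map (nth 0 w) (map predn ps) by rewrite -map_comp.
rewrite -{2}(mkseq_nth 0 w) /mkseq; apply: map_subseq; apply: sub_iota.
  rewrite all_map; apply/allP => p Hp; move/allP: Ha => /(_ p Hp) /=; lia.
elim: ps Ha Hs => // p ps IH /= /andP[Hp0 Ha] Hp.
case: ps IH Ha Hp => //= q ps IH /andP[Hq Ha] /andP[Hpq Hr].
rewrite IH /= ?Hq ?Ha // andbT; lia.
Qed.


Lemma pat (w : seq nat) a b c d e (A B C D E : nat) :
  A = w `@ a -> B = w `@ b -> C = w `@ c -> D = w `@ d -> E = w `@ e ->
  0 < a -> a < b -> b < c -> c < d -> d < e -> e <= size w ->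
  B < A -> C < A -> A < D -> A < E -> B != C -> D != E ->
  avoids w [:: 3; 1; 2; 4; 5] -> avoids w [:: 3; 2; 1; 4; 5] ->
  avoids w [:: 3; 1; 2; 5; 4] -> avoids w [:: 3; 2; 1; 5; 4] -> False.
Proof.
move=> eA eB eC eD eE ha hb hc hd he hn h1 h2 h3 h4 hBC hDE a1 a2 a3 a4.
have Hsub : subseq [:: A; B; C; D; E] w.
  rewrite eA eB eC eD eE; apply: (@subseq_pos w [:: a; b; c; d; e]) => /=; lia.
have key : forall P : seq nat, avoids w P -> order_iso [:: A; B; C; D; E] P -> False.
  by move=> P HP; apply: HP.
have [HBC|HBC] := ltnP B C; have [HDE|HDE] := ltnP D E;
  [apply: (key _ a1)|apply: (key _ a3)|apply: (key _ a2)|apply: (key _ a4)];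
  split => // i j Hi Hj;
  case: i Hi => [|[|[|[|[|i]]]]] // _; case: j Hj => [|[|[|[|[|j]]]]] // _ /=;
  try (case: ltnP => H //; lia).
Qed.

Lemma dist0 w i j : uniq w -> 0 < i <= size w -> 0 < j <= size w -> w `@ i = w `@ j -> i = j.
Proof.
rewrite /letter => Hu Hi Hj /eqP; rewrite nth_uniq //; [move/eqP; lia|lia|lia].
Qed.

Lemma dist (w : seq nat) i j : uniq w -> 0 < i <= size w -> 0 < j <= size w -> w `@ i = w `@ j -> i = j.
Proof. exact: dist0. Qed.

Lemma ltr_below (w : seq nat) x y : is_ltr_max w x -> y <= (size w).+1 ->
  (forall j, x < j < y -> ~~ is_ltr_max w j) ->
  forall j, x < j < y -> w `@ j <= w `@ x.
Proof.
move=> /andP[Hx Hxa] Hy Hn j; elim/ltn_ind: j => j IH Hj.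
have := Hn j Hj; rewrite /is_ltr_max.
have -> : (1 <= j <= size w) by lia.
rewrite /= -has_predC => /hasP[i]; rewrite mem_iota /= -leqNgt => Hi Hle.
have [Hix|Hix|Hix] := ltngtP i x.
- move/allP: Hxa => /(_ i); rewrite mem_iota => H; have := H ltac:(lia); lia.
- have := IH i ltac:(lia) ltac:(lia); lia.
- by rewrite -Hix.
Qed.

Lemma not_between (L : seq nat) k j : sorted ltn L -> k.+1 < size L ->
  nth 0 L k < j < nth 0 L k.+1 -> j \notin L.
Proof.
move=> Hs Hk Hj; apply/negP => Hin.
have Hi := Hin; rewrite -index_mem in Hi; have Hn := nth_index 0 Hin.
have Hlt := sorted_ltn_nth ltn_trans 0 Hs.
have [H|H|H] := ltngtP (index j L) k.
- have := Hlt (index j L) k; rewrite !inE Hn => /(_ Hi ltac:(lia) H); lia.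
- have [H2|H2|H2] := ltngtP (index j L) k.+1.
  + lia.
  + have := Hlt k.+1 (index j L); rewrite !inE Hn => /(_ Hk Hi H2); lia.
  + move: Hn; rewrite H2 => Hn; rewrite Hn in Hj; lia.
- move: Hn; rewrite H => Hn; rewrite Hn in Hj; lia.
Qed.

Theorem lemma3p1 (w : seq nat) :
  distinct_pos_word w ->
  avoids w [:: 3; 1; 2; 4; 5] -> avoids w [:: 3; 2; 1; 4; 5] ->
  avoids w [:: 3; 1; 2; 5; 4] -> avoids w [:: 3; 2; 1; 5; 4] ->
  let s := size (ltr_pos w) in
  let t := size (rtl_pos w) in
  let ls := lpos w s in
  let ls1 := lpos w s.-1 in
  let r2 := rpos w 2 in
  let I1 := ls = ls1 + 1 in
  let I2 := ls = ls1 + 2 /\ (forall j, ls < j < r2 -> w `@ j < w `@ ls1) in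
  let I3 := ls = ls1 + 2 /\
            (exists k, [/\ ls < k < r2,
                           (forall j, ls < j <= k -> w `@ ls1 < w `@ j) &
                           (forall j, k < j < r2 -> w `@ j < w `@ ls1)]) in
  1 < s -> 1 < t -> s < ls -> w `@ ls1 < w `@ r2 ->
  [/\ I1, ~ I2 & ~ I3] \/ [/\ ~ I1, I2 & ~ I3] \/ [/\ ~ I1, ~ I2 & I3].
Proof.
move=> [Hu Hpos] a1 a2 a3 a4 s t ls ls1 r2 I1 I2 I3 Hs Ht Hsls Ha.
have es : s = size (ltr_pos w) := erefl.
have et : t = size (rtl_pos w) := erefl.
have els : ls = nth 0 (ltr_pos w) (s.-2).+1.
  rewrite /ls /lpos; congr (nth _ _ _); lia.
have els1 : ls1 = nth 0 (ltr_pos w) s.-2 := erefl.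
have er2 : r2 = nth 0 (rtl_pos w) 1 := erefl.
clearbody s t ls ls1 r2.
have Dst := fun i j => @dist w i j Hu.
have HLs : sorted ltn (ltr_pos w) := sorted_filter ltn_trans _ (iota_ltn_sorted 1 _).
have HRs : sorted ltn (rtl_pos w) := sorted_filter ltn_trans _ (iota_ltn_sorted 1 _).
have HmemL x : x \in ltr_pos w -> (0 < x <= size w) /\ is_ltr_max w x.
  rewrite mem_filter mem_iota => /andP[-> ?]; split => //; lia.
have HmemR x : x \in rtl_pos w -> (0 < x <= size w) /\ is_rtl_max w x.
  rewrite mem_filter mem_iota => /andP[-> ?]; split => //; lia.
have [/andP[Hls0 Hlsn] Hlsm] : (0 < ls <= size w) /\ is_ltr_max w ls.
  apply: HmemL; rewrite els mem_nth //; rewrite -es; lia.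
have [/andP[Hls10 Hls1n] Hls1m] : (0 < ls1 <= size w) /\ is_ltr_max w ls1.
  by apply: HmemL; rewrite els1 mem_nth // -es; lia.
have Hl1l : ls1 < ls.
  rewrite els els1; apply: (sorted_ltn_nth ltn_trans 0 HLs); rewrite ?inE; lia.
have Hbet j : ls1 < j < ls -> ~~ is_ltr_max w j.
  move=> Hj; apply/negP => Hm.
  have : j \notin ltr_pos w by apply: (@not_between _ s.-2 j HLs); [rewrite -es; lia | rewrite -els -els1]...
  by rewrite mem_filter Hm mem_iota /=; apply/negP/negPn; lia.
have Hbelow j : ls1 < j < ls -> w `@ j < w `@ ls1.
  move=> Hj; have := @ltr_below w ls1 ls Hls1m ltac:(lia) Hbet j Hj.
  rewrite leq_eqVlt => /orP[/eqP H|//]; have hj : 0 < j <= size w by lia.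
  have hl : 0 < ls1 <= size w by lia.
  have := Dst j ls1 hj hl H; lia.
have Ham : w `@ ls1 < w `@ ls.
  by move: Hlsm => /andP[_ /allP]; apply; rewrite mem_iota; lia.
have [/andP[Hr20 Hr2n] Hr2m] : (0 < r2 <= size w) /\ is_rtl_max w r2.
  by apply: HmemR; rewrite er2 mem_nth // -et; lia.
have [/andP[Hr10 Hr1n] Hr1m] : (0 < nth 0 (rtl_pos w) 0 <= size w) /\ is_rtl_max w (nth 0 (rtl_pos w) 0).
  by apply: HmemR; rewrite mem_nth // -et; lia.
have Hr12 : nth 0 (rtl_pos w) 0 < r2.
  by rewrite er2; apply: (sorted_ltn_nth ltn_trans 0 HRs); rewrite ?inE /= -?et; lia.
have Hlsr2 : ls < r2.
  have [H|H|H] := ltngtP ls r2 => //.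
  - have h1 : w `@ ls < w `@ r2 by move: Hr2m => /andP[_ /allP]; apply; rewrite mem_iota; lia.
    have h2 : w `@ r2 < w `@ ls by move: Hlsm => /andP[_ /allP]; apply; rewrite mem_iota; lia.
    lia.
  - have h1 : w `@ ls < w `@ (nth 0 (rtl_pos w) 0) by move: Hr1m => /andP[_ /allP]; apply; rewrite mem_iota; lia.
    have h2 : w `@ (nth 0 (rtl_pos w) 0) < w `@ ls by move: Hlsm => /andP[_ /allP]; apply; rewrite mem_iota; lia.
    lia.
clear HmemL HmemR Hbet els els1 er2 es et HLs HRs Hr10 Hr1n Hr1m Hr12 Hlsm Hls1m Hr2m Hsls Hs Ht Hpos.
have Hmr2 : w `@ ls != w `@ r2.
  apply/eqP => H; have : ls = r2 by apply: Dst => //; lia.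
  lia.
have Hle : ls <= ls1 + 2.
  case: (leqP ls (ls1 + 2)) => // H; exfalso.
  apply: (@pat w (ls1) (ls1.+1) (ls1.+2) (ls) (r2) _ _ _ _ _ erefl erefl erefl erefl erefl _ _ _ _ _ _ _ _ _ _ _ _ a1 a2 a3 a4).
  1-6: lia.
  - apply: Hbelow; lia.
  - apply: Hbelow; lia.
  - exact: Ham.
  - exact: Ha.
  - apply/eqP => E; have : ls1.+1 = ls1.+2 by apply: Dst => //; lia.
    lia.
  - exact: Hmr2.
have [E1|E2] : ls = ls1 + 1 \/ ls = ls1 + 2 by lia.
  left; split => //; [move=> [] | move=> []]; lia.
right.
have Hb : w `@ ls1.+1 < w `@ ls1 by apply: Hbelow; lia.
have HneA j : 0 < j <= size w -> j != ls1 -> w `@ j != w `@ ls1.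
  move=> Hj Hne; apply/eqP => E; have : j = ls1 by apply: Dst => //; lia.
  lia.
case: (boolP (has (fun j => w `@ ls1 < w `@ j) (iota ls.+1 (r2 - ls.+1)))) => Hh.
  right.
  have Hex : exists j, (ls < j < r2) && (w `@ ls1 < w `@ j).
    move/hasP: Hh => [j]; rewrite mem_iota => Hj Hv; exists j; rewrite Hv andbT; lia.
  have Hbd : forall j, (ls < j < r2) && (w `@ ls1 < w `@ j) -> j <= r2.
    move=> j /andP[]; lia.
  case: (ex_maxnP Hex Hbd) => k /andP[Hk Hvk] Hmax.
  have I3h : I3.
    split => //; exists k; split => //.
    - move=> j Hj; case: (ltngtP j k) => [Hjk|Hjk|->] //; last lia.
      have : w `@ j != w `@ ls1 by apply: HneA; lia.
      case: ltngtP => // Hlt _; exfalso.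
      apply: (@pat w (ls1) (ls1.+1) (j) (k) (r2) _ _ _ _ _ erefl erefl erefl erefl erefl _ _ _ _ _ _ _ _ _ _ _ _ a1 a2 a3 a4).
      1-6: lia.
      + exact: Hb.
      + exact: Hlt.
      + exact: Hvk.
      + exact: Ha.
      + apply/eqP => E; have : ls1.+1 = j by apply: Dst => //; lia.
        lia.
      + apply/eqP => E; have : k = r2 by apply: Dst => //; lia.
        lia.
    - move=> j Hj; have : w `@ j != w `@ ls1 by apply: HneA; lia.
      case: (ltngtP (w `@ j) (w `@ ls1)) => // Hlt _; have : j <= k by apply: Hmax; rewrite Hlt andbT; lia.
      lia.
  split => //; [rewrite /I1; lia | move=> [_ H2]].
  case: I3h => _ [k' [Hk' H1 _]]; have h1 := H1 k'; have h2 := H2 k'.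
  have : w `@ ls1 < w `@ k' by apply: h1; lia.
  have : w `@ k' < w `@ ls1 by apply: h2; lia.
  lia.
left.
have I2h : I2.
  split => // j Hj; have : w `@ j != w `@ ls1 by apply: HneA; lia.
  case: (ltngtP (w `@ j) (w `@ ls1)) => // Hlt _; exfalso; move/negP: Hh; apply; apply/hasP; exists j => //; rewrite mem_iota; lia.
split => //; [rewrite /I1; lia | move=> [_ [k [Hk H1 _]]]].
case: I2h => _ H2; have h1 := H1 k; have h2 := H2 k.
  have : w `@ ls1 < w `@ k by apply: h1; lia.
  have : w `@ k < w `@ ls1 by apply: h2; lia.
  lia.
Qed.
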